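(* There is a Katětov functor $F\colon\mathcal U_{\mathrm{fin}}\to\mathcal U_{\mathrm{fin}}$, i.e. a functor $F$ together with a natural transformation $\eta\colon\mathrm{id}_{\mathcal U_{\mathrm{fin}}}\to F$ such that for every finite two-sorted ultrametric space $X$ and every one-point extension $f\colon X\to Y$ there is a dc-embedding $g\colon Y\to F(X)$ with $g\circ f=\eta_X$.
   Context: A two-sorted ultrametric space is $(X,d_X,D_X)$ with $D_X$ a linear order with least element $0$, $d_X\colon X\times X\to D_X$ symmetric, $d_X(x,y)=0\iff x=y$, $d_X(x,z)\le\max\{d_X(x,y),d_X(y,z)\}$; finite if both sorts are finite. $\mathcal U_{\mathrm{fin}}$ is the category of finite two-sorted ultrametric spaces with dc-embeddings (an injection $f$ on points with an order embedding $D_f$ of distance sets fixing $0$ such that $d(f(x),f(x'))=D_f(d(x,x'))$). A one-point extension is a dc-embedding between finite spaces that (up to isomorphism) either adds exactly one new distance and no new points, or adds exactly one new point and no new distances. *)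

(* Defs.v *)
From HB Require Import structures.
From mathcomp Require Import all_boot.
Set Implicit Arguments.
Unset Strict Implicit.
Unset Printing Implicit Defensive.

Record FinUltra := {
  pts : finType;
  dst : finType;
  dle : rel dst;
  dzero : dst;
  dle_refl : forall a, dle a a;
  dle_anti : forall a b, dle a b -> dle b a -> a = b;
  dle_trans : forall a b c, dle a b -> dle b c -> dle a c;
  dle_total : forall a b, dle a b || dle b a;
  dzero_least : forall a, dle dzero a;
  d : pts -> pts -> dst;
  d_sym : forall x y, d x y = d y x;
  d_zero : forall x y, d x y = dzero <-> x = y;
  d_ultra : forall x y z, dle (d x z) (d x y) || dle (d x z) (d y z)
}.

Record dcEmb (X Y : FinUltra) := {
  emb_pt : pts X -> pts Y;
  emb_d : dst X -> dst Y;
  emb_pt_inj : injective emb_pt;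
  emb_d_order : forall a b, dle (emb_d a) (emb_d b) = dle a b;
  emb_d_zero : emb_d (dzero X) = dzero Y;
  emb_dist : forall x x', d (emb_pt x) (emb_pt x') = emb_d (d x x')
}.

Definition emb_eq (X Y : FinUltra) (f g : dcEmb X Y) : Prop :=
  (forall x, emb_pt f x = emb_pt g x) /\ (forall a, emb_d f a = emb_d g a).

Lemma dcEmb_id_proof (X : FinUltra) :
  forall a b : dst X, dle (id a) (id b) = dle a b.
Proof. by []. Qed.

Definition dc_id (X : FinUltra) : dcEmb X X :=
  @Build_dcEmb X X id id (@inj_id _) (@dcEmb_id_proof X) erefl (fun _ _ => erefl).

Section Comp.
Variables (X Y Z : FinUltra) (g : dcEmb Y Z) (f : dcEmb X Y).
Lemma dc_comp_inj : injective (emb_pt g \o emb_pt f).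
Proof. by move=> x y /= /(@emb_pt_inj _ _ g)/(@emb_pt_inj _ _ f). Qed.
Lemma dc_comp_order :
  forall a b, dle ((emb_d g \o emb_d f) a) ((emb_d g \o emb_d f) b) = dle a b.
Proof. by move=> a b /=; rewrite !emb_d_order. Qed.
Lemma dc_comp_zero : (emb_d g \o emb_d f) (dzero X) = dzero Z.
Proof. by rewrite /= !emb_d_zero. Qed.
Lemma dc_comp_dist : forall x x',
  d ((emb_pt g \o emb_pt f) x) ((emb_pt g \o emb_pt f) x')
  = (emb_d g \o emb_d f) (d x x').
Proof. by move=> x x' /=; rewrite !emb_dist. Qed.
Definition dc_comp : dcEmb X Z :=
  Build_dcEmb dc_comp_inj dc_comp_order dc_comp_zero dc_comp_dist.
End Comp.

Record UFunctor := {
  Fobj : FinUltra -> FinUltra;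
  Fmor : forall X Y, dcEmb X Y -> dcEmb (Fobj X) (Fobj Y);
  Fmor_id : forall X, emb_eq (Fmor (dc_id X)) (dc_id (Fobj X));
  Fmor_comp : forall X Y Z (g : dcEmb Y Z) (f : dcEmb X Y),
      emb_eq (Fmor (dc_comp g f)) (dc_comp (Fmor g) (Fmor f))
}.

Definition natural_from_id (F : UFunctor) (eta : forall X, dcEmb X (Fobj F X))
  : Prop :=
  forall X Y (f : dcEmb X Y),
    emb_eq (dc_comp (eta Y) f) (dc_comp (Fmor F f) (eta X)).

Definition one_point_ext (X Y : FinUltra) (f : dcEmb X Y) : Prop :=
  (bijective (emb_pt f) /\ #|[predC codom (emb_d f)]| = 1)
  \/ (bijective (emb_d f) /\ #|[predC codom (emb_pt f)]| = 1).

(* Main.v *)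
Require Import Defs.
From mathcomp Require Import all_boot.
From mathcomp Require Import zify.
Set Implicit Arguments.
Unset Strict Implicit.
Unset Printing Implicit Defensive.

Section Ord.
Variable X : FinUltra.
Implicit Types a b c : dst X.

Definition rk a := #|[pred b | dle b a]|.

Lemma dle_rk a b : dle a b -> rk a <= rk b.
Proof.
move=> ab; apply: subset_leq_card; apply/subsetP => c; rewrite !inE => ca.
exact: dle_trans ca ab.
Qed.

Lemma ndle_rk a b : ~~ dle a b -> rk b < rk a.
Proof.
move=> nab; have ba : dle b a by move: (dle_total a b); rewrite (negbTE nab).
apply: proper_card; rewrite properE; apply/andP; split.
  apply/subsetP => c; rewrite !inE => cb; exact: dle_trans cb ba.
apply/subsetPn; exists a; rewrite !inE ?dle_refl //.
Qed.

Lemma leE a b : dle a b = (rk a <= rk b).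
Proof.
case ab: (dle a b); first by rewrite dle_rk.
by apply/esym/negbTE; rewrite -ltnNge; apply: ndle_rk; rewrite ab.
Qed.

Lemma rk_inj a b : rk a = rk b -> a = b.
Proof.
by move=> e; apply: dle_anti; rewrite leE e.
Qed.

Lemma rk0 a : rk (dzero X) <= rk a.
Proof. by rewrite -leE dzero_least. Qed.

Lemma rk_le_card a : rk a <= #|dst X|.
Proof. exact: max_card. Qed.

Definition dmax a b := if dle a b then b else a.

Lemma rk_max a b : rk (dmax a b) = maxn (rk a) (rk b).
Proof.
rewrite /dmax leE; case: leqP => h; lia.
Qed.

Lemma ultraR x y z : rk (d x z) <= maxn (rk (d x y)) (rk (d y z)).
Proof.
by move: (d_ultra x y z); rewrite !leE; case/orP; lia.
Qed.

Lemma rk_d0 x y : rk (d x y) = rk (dzero X) -> x = y.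
Proof. by move/rk_inj/d_zero. Qed.

Lemma rk_dxx x : rk (d x x) = rk (dzero X).
Proof. by have [_ ->] := d_zero x x. Qed.

Definition minD (T : finType) (g : T -> dst X) : dst X :=
  odflt (dzero X) [pick a | [exists t, g t == a] && [forall t, dle a (g t)]].

Lemma minD_spec (T : finType) (g : T -> dst X) (t0 : T) :
  (exists t, minD g = g t) /\ (forall t, rk (minD g) <= rk (g t)).
Proof.
rewrite /minD; case: pickP => [a /andP[/existsP[t /eqP <-] /forallP H]|H] /=.
  by split; [exists t| move=> s; rewrite -leE].
exfalso; set t1 := [arg min_(t < t0) rk (g t)].
case: (@arg_minnP _ t0 xpredT (fun t => rk (g t)) isT) => t _ Ht.
move: (H (g t)); rewrite /=.
have -> : [exists t', g t' == g t] by apply/existsP; exists t.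
have -> // : [forall t', dle (g t) (g t')].
by apply/forallP => s; rewrite leE; apply: Ht.
Qed.

Lemma minD_le (T : finType) (g : T -> dst X) t : rk (minD g) <= rk (g t).
Proof. by case: (minD_spec g t) => _; apply. Qed.

Lemma minD_ex (T : finType) (g : T -> dst X) (t0 : T) : exists t, minD g = g t.
Proof. by case: (minD_spec g t0). Qed.

End Ord.

Section Emb.
Variables (X Y : FinUltra) (f : dcEmb X Y).

Lemma rk_emb a b : (rk (emb_d f a) <= rk (emb_d f b)) = (rk a <= rk b).
Proof. by rewrite -!leE emb_d_order. Qed.

Lemma emb_d_inj : injective (emb_d f).
Proof.
by move=> a b e; apply: dle_anti; rewrite -(emb_d_order f) e dle_refl.
Qed.

Lemma rk_emb_lt a b : (rk (emb_d f a) < rk (emb_d f b)) = (rk a < rk b).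
Proof. by rewrite !ltnNge rk_emb. Qed.

Lemma emb_max a b : emb_d f (dmax a b) = dmax (emb_d f a) (emb_d f b).
Proof. by rewrite /dmax emb_d_order; case: ifP. Qed.

Lemma rk_emb0 : rk (emb_d f (dzero X)) = rk (dzero Y).
Proof. by rewrite emb_d_zero. Qed.

End Emb.


Lemma minD_char (X : FinUltra) (T : finType) (g : T -> dst X) (t0 : T) a :
  (forall t, rk a <= rk (g t)) -> (exists t, rk (g t) <= rk a) -> minD g = a.
Proof.
move=> H [t Ht]; apply: rk_inj; have h1 := minD_le g t.
have [t1 e] := minD_ex g t0; have h2 := H t1; rewrite e in h1 *; lia.
Qed.

Lemma minD_ext (X : FinUltra) (T : finType) (g h : T -> dst X) (t0 : T) :
  (forall t, rk (g t) = rk (h t)) -> minD g = minD h.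
Proof.
move=> H; apply: (minD_char t0) => [t|].
  by rewrite H; apply: minD_le.
by have [t1 ->] := minD_ex h t0; exists t1; rewrite H.
Qed.

Section FObj.
Variable X : FinUltra.

Definition kat (u : {ffun pts X -> dst X}) : bool :=
  [forall x, [forall y, (rk (u x) <= maxn (rk (d x y)) (rk (u y)))
                     && (rk (d x y) <= maxn (rk (u x)) (rk (u y)))]]
  && (0 < #|pts X|).

Lemma katP u : kat u -> forall x y,
  rk (u x) <= maxn (rk (d x y)) (rk (u y)) /\ rk (d x y) <= maxn (rk (u x)) (rk (u y)).
Proof. by case/andP => /forallP H _ x y; move/forallP: (H x) => /(_ y) /andP. Qed.

Lemma kat_ex u : kat u -> exists x : pts X, true.
Proof. by case/andP => _ /card_gt0P [x _]; exists x. Qed.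

Definition Kp := {u : {ffun pts X -> dst X} | kat u}.
Definition FP := option Kp.
Definition FD := option (dst X * bool)%type.

Definition key (u : FD) : nat :=
  match u with None => (2 * #|dst X|).+2 | Some (a, b) => 2 * rk a + b end.
Definition fle (u v : FD) : bool := key u <= key v.
Definition fzero : FD := Some (dzero X, false).

Lemma key_inj u v : key u = key v -> u = v.
Proof.
case: u => [[a b]|]; case: v => [[a' b']|] //=.
- move=> e; have e1 : rk a = rk a' by case: b e; case: b' => /= e; lia.
  have e2 : b = b' by case: b e; case: b' => /= e //; lia.
  by rewrite (rk_inj e1) e2.
- have := rk_le_card a; case: b => /=; lia.
- have := rk_le_card a'; case: b' => /=; lia.
Qed.

Lemma fle_refl a : fle a a. Proof. exact: leqnn. Qed.
Lemma fle_anti a b : fle a b -> fle b a -> a = b.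
Proof. by rewrite /fle => h1 h2; apply: key_inj; apply/eqP; rewrite eqn_leq h1. Qed.
Lemma fle_trans a b c : fle a b -> fle b c -> fle a c.
Proof. exact: leq_trans. Qed.
Lemma fle_total a b : fle a b || fle b a.
Proof. exact: leq_total. Qed.
Lemma fzero_least a : fle fzero a.
Proof.
rewrite /fle /fzero /key; case: a => [[a b]|] /=; last first. have := rk_le_card (dzero X). move: (rk (dzero X)) (#|dst X|) => r n. lia.
by case: b => /=; have := rk0 a; lia.
Qed.

Definition mD (u v : Kp) : dst X := minD (fun x => dmax (val u x) (val v x)).

Definition fd (p q : FP) : FD :=
  match p, q with
  | Some u, Some v => if u == v then fzero else Some (mD u v, false)
  | None, None => fzero
  | _, _ => None
  end.

Lemma mD_sym u v : mD u v = mD v u.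
Proof.
have [x0 _] := kat_ex (valP u).
by rewrite /mD; apply: (minD_ext x0) => t; rewrite !rk_max maxnC.
Qed.

Lemma kat_zero (u : Kp) x : rk (val u x) = rk (dzero X) -> forall y, rk (val u y) = rk (d x y).
Proof.
move=> e y; have [h1 h2] := katP (valP u) x y; have [h3 h4] := katP (valP u) y x.
rewrite d_sym in h3 h4; have := rk0 (val u y); have := rk0 (d x y); lia.
Qed.

Lemma mD_neq0 u v : u != v -> mD u v != dzero X.
Proof.
move=> nuv; apply/eqP => e; move/negP: nuv; apply; apply/eqP.
have [x0 _] := kat_ex (valP u).
have [x ex] := minD_ex (fun x => dmax (val u x) (val v x)) x0.
rewrite -/(mD u v) e in ex.
have : rk (dzero X) = rk (dmax (val u x) (val v x)) by rewrite -ex.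
rewrite rk_max => h; have := rk0 (val u x); have := rk0 (val v x) => h3 h4.
have eu : rk (val u x) = rk (dzero X) by lia.
have ev : rk (val v x) = rk (dzero X) by lia.
apply: val_inj; apply/ffunP => y; apply: rk_inj.
by rewrite (kat_zero eu) (kat_zero ev).
Qed.

Lemma fd_sym p q : fd p q = fd q p.
Proof.
case: p => [u|]; case: q => [v|] //=; rewrite eq_sym; case: ifP => // _.
by rewrite mD_sym.
Qed.

Lemma fd_zero p q : fd p q = fzero <-> p = q.
Proof.
split; last by move=> ->; case: q => [v|] //=; rewrite eqxx.
case: p => [u|]; case: q => [v|] //=; case: eqP => [-> //|/eqP nuv [] e].
by move: (mD_neq0 nuv); rewrite e eqxx.
Qed.

Lemma fd_ultra p q r : fle (fd p r) (fd p q) || fle (fd p r) (fd q r).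
Proof.
have top : forall a : FD, key a <= (2 * #|dst X|).+2.
  case=> [[a b]|] //=; have := rk_le_card a; move: (rk a) (#|dst X|) => r0 n; case: b => /=; lia.
have bot : forall a : FD, key fzero <= key a by exact: fzero_least.
rewrite /fle.
case: p => [u|]; case: q => [v|]; case: r => [w|] /=; rewrite ?top ?bot ?orbT //.
all: try by rewrite ltnSn ?orbT.
all: try by apply/orP; left; apply: (top fzero).
all: try by rewrite leqnn.
case: (eqVneq u w) => [->|nuw]; first by rewrite ?eqxx ?bot.
case: (eqVneq v w) => [->|nvw]; first by rewrite (negbTE nuw) leqnn.
case: (eqVneq u v) => [->|nuv]; first by rewrite ?eqxx ?(negbTE nvw) leqnn ?orbT.
rewrite ?(negbTE nuv) ?(negbTE nvw).
have [x0 _] := kat_ex (valP u).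
have [x ex] := minD_ex (fun x => dmax (val u x) (val v x)) x0.
have [y ey] := minD_ex (fun x => dmax (val v x) (val w x)) x0.
rewrite /mD ex ey /= !rk_max.
have := minD_le (fun x => dmax (val u x) (val w x)) x; rewrite rk_max.
have [h1 _] := katP (valP w) x y; have [_ h2] := katP (valP v) x y.
move=> h3; rewrite /= in h1 h2 h3 *; lia.
Qed.

Definition FX : FinUltra :=
  @Build_FinUltra FP FD fle fzero fle_refl fle_anti fle_trans
    fle_total fzero_least fd fd_sym fd_zero fd_ultra.

End FObj.


Lemma key_lex (p q p' q' : nat) (b b' : bool) :
  (p <= q) = (p' <= q') -> (q <= p) = (q' <= p') ->
  (2 * p + b <= 2 * q + b') = (2 * p' + b <= 2 * q' + b').
Proof.
case: (leqP p q) => H1; case: (leqP q p) => H2;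
case: (leqP p' q') => H3; case: (leqP q' p') => H4 // _ _;
case: b; case: b' => /=; apply/idP/idP; lia.
Qed.

Section FMor.
Variables (X Y : FinUltra) (f : dcEmb X Y).

Lemma rk_emb_max a b c :
  (rk (emb_d f a) <= maxn (rk (emb_d f b)) (rk (emb_d f c))) = (rk a <= maxn (rk b) (rk c)).
Proof. by rewrite -!rk_max -emb_max rk_emb. Qed.

Definition ext (u : {ffun pts X -> dst X}) : {ffun pts Y -> dst Y} :=
  [ffun z => minD (fun x => dmax (emb_d f (u x)) (d (emb_pt f x) z))].

Lemma ext_at (u : Kp X) x : ext (val u) (emb_pt f x) = emb_d f (val u x).
Proof.
rewrite ffunE; apply: (minD_char x) => [t|]; last first.
  exists x; rewrite rk_max; have := rk_dxx (emb_pt f x); have := rk0 (emb_d f (val u x)); lia.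
rewrite rk_max emb_dist -rk_max -emb_max rk_emb rk_max.
have [h _] := katP (valP u) x t. by rewrite (d_sym t x) maxnC.
Qed.

Lemma ext_kat (u : Kp X) : kat (ext (val u)).
Proof.
have [x0 _] := kat_ex (valP u).
apply/andP; split; last by apply/card_gt0P; exists (emb_pt f x0).
apply/forallP => z; apply/forallP => z'; apply/andP; split.
- have [x ex] := minD_ex (fun x => dmax (emb_d f (val u x)) (d (emb_pt f x) z')) x0.
  have h1 := minD_le (fun x => dmax (emb_d f (val u x)) (d (emb_pt f x) z)) x.
  rewrite !ffunE ex; rewrite !rk_max in h1 *.
  have := ultraR (emb_pt f x) z' z; rewrite (d_sym z' z); lia.
- have [x ex] := minD_ex (fun x => dmax (emb_d f (val u x)) (d (emb_pt f x) z)) x0.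
  have [y ey] := minD_ex (fun x => dmax (emb_d f (val u x)) (d (emb_pt f x) z')) x0.
  rewrite !ffunE ex ey !rk_max.
  have h1 := ultraR z (emb_pt f x) z'; have h2 := ultraR (emb_pt f x) (emb_pt f y) z'.
  have [_ h3] := katP (valP u) x y; rewrite -rk_emb_max in h3.
  rewrite emb_dist in h2; rewrite (d_sym z (emb_pt f x)) in h1; lia.
Qed.

Definition extK (u : Kp X) : Kp Y := exist _ (ext (val u)) (ext_kat u).

Lemma extK_inj : injective extK.
Proof.
move=> u v /(congr1 val) /= e; apply: val_inj; apply/ffunP => x.
by apply: (@emb_d_inj _ _ f); rewrite -!ext_at e.
Qed.

Definition Fpt (p : FP X) : FP Y := omap extK p.
Definition Fd (a : FD X) : FD Y := omap (fun p => (emb_d f p.1, p.2)) a.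

Lemma Fpt_inj : injective Fpt.
Proof. by case=> [u|]; case=> [v|] //= e; rewrite (extK_inj (Some_inj e)). Qed.

Lemma Fd_order a b : fle (Fd a) (Fd b) = fle a b.
Proof.
have top : forall n, n <= #|dst Y| -> (2 * n + 1 <= (2 * #|dst Y|).+2) by move=> n; lia.
have top' : forall n, n <= #|dst X| -> (2 * n + 1 <= (2 * #|dst X|).+2) by move=> n; lia.
rewrite /fle; case: a => [[a b1]|]; case: b => [[a' b2]|] //=.
- by apply: key_lex; rewrite rk_emb.
- have t1 := top _ (rk_le_card (emb_d f a)); have t2 := top' _ (rk_le_card a).
  by case: b1 t1 t2 => /= t1 t2; apply/idP/idP => _; lia.
- have t1 := top _ (rk_le_card (emb_d f a')); have t2 := top' _ (rk_le_card a').
  by case: b2 t1 t2 => /= t1 t2; apply/idP/idP => h; lia.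
- by rewrite !ltnSn.
Qed.

Lemma mD_ext (u v : Kp X) : mD (extK u) (extK v) = emb_d f (mD u v).
Proof.
have [x0 _] := kat_ex (valP u).
rewrite /mD /=; apply: (minD_char (emb_pt f x0)).
- move=> z; rewrite rk_max !ffunE.
  have [x ex] := minD_ex (fun x => dmax (emb_d f (val u x)) (d (emb_pt f x) z)) x0.
  have [y ey] := minD_ex (fun x => dmax (emb_d f (val v x)) (d (emb_pt f x) z)) x0.
  rewrite ex ey !rk_max.
  have h1 := minD_le (fun x => dmax (val u x) (val v x)) x.
  rewrite rk_max -rk_emb_max in h1.
  have [h2 _] := katP (valP v) x y; rewrite -rk_emb_max -emb_dist in h2.
  have h3 := ultraR (emb_pt f x) z (emb_pt f y); rewrite (d_sym z (emb_pt f y)) in h3.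
  rewrite /= in h1 h2 h3 *; lia.
- have [x ex] := minD_ex (fun x => dmax (val u x) (val v x)) x0.
  exists (emb_pt f x); have e1 := ext_at u x; have e2 := ext_at v x.
  rewrite /= in e1 e2 ex *; rewrite e1 e2 ex emb_max leqnn //.
Qed.

Lemma Fd_zero : Fd (fzero X) = fzero Y.
Proof. by rewrite /Fd /fzero /= emb_d_zero. Qed.

Lemma F_dist p q : fd (Fpt p) (Fpt q) = Fd (fd p q).
Proof.
case: p => [u|]; case: q => [v|] //=; last by rewrite -Fd_zero.
case: (eqVneq u v) => [->|nuv]; first by rewrite eqxx -Fd_zero.
have -> : (extK u == extK v) = false.
  by apply/negbTE; apply: contra nuv => /eqP /extK_inj ->.
by rewrite mD_ext.
Qed.

Definition Fmor_emb : dcEmb (FX X) (FX Y) :=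
  @Build_dcEmb (FX X) (FX Y) Fpt Fd Fpt_inj Fd_order Fd_zero F_dist.

End FMor.


Lemma ext_id (X : FinUltra) (u : Kp X) : ext (dc_id X) (val u) = val u.
Proof. by apply/ffunP => z; exact: (ext_at (dc_id X) u z). Qed.

Lemma ext_comp (X Y Z : FinUltra) (g : dcEmb Y Z) (f : dcEmb X Y) (u : Kp X) :
  ext (dc_comp g f) (val u) = ext g (ext f (val u)).
Proof.
have [x0 _] := kat_ex (valP u).
apply/ffunP => w; apply: rk_inj; rewrite !ffunE /=.
apply/eqP; rewrite eqn_leq; apply/andP; split.
- have [z ez] := minD_ex (fun z => dmax (emb_d g (ext f (val u) z)) (d (emb_pt g z) w)) (emb_pt f x0).
  rewrite ez ffunE.
  have [x ex] := minD_ex (fun x => dmax (emb_d f (val u x)) (d (emb_pt f x) z)) x0.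
  rewrite ex emb_max !rk_max.
  have h := minD_le (fun x => dmax (emb_d g (emb_d f (val u x))) (d (emb_pt g (emb_pt f x)) w)) x.
  have h2 := ultraR (emb_pt g (emb_pt f x)) (emb_pt g z) w.
  rewrite emb_dist in h2; rewrite rk_max in h; rewrite /= in h h2 *; lia.
- have [x ex] := minD_ex (fun x => dmax (emb_d g (emb_d f (val u x))) (d (emb_pt g (emb_pt f x)) w)) x0.
  rewrite ex.
  have h := minD_le (fun z => dmax (emb_d g (ext f (val u) z)) (d (emb_pt g z) w)) (emb_pt f x).
  rewrite ext_at in h; rewrite /= in h *; exact: h.
Qed.

Lemma Fmor_id_proof (X : FinUltra) : emb_eq (Fmor_emb (dc_id X)) (dc_id (FX X)).
Proof.
split.
  case=> [u|] //=; congr Some; apply: val_inj; exact: ext_id.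
by case=> [[a b]|].
Qed.

Lemma Fmor_comp_proof (X Y Z : FinUltra) (g : dcEmb Y Z) (f : dcEmb X Y) :
  emb_eq (Fmor_emb (dc_comp g f)) (dc_comp (Fmor_emb g) (Fmor_emb f)).
Proof.
split.
  case=> [u|] //=; congr Some; apply: val_inj; exact: ext_comp.
by case=> [[a b]|].
Qed.

Definition Ffun : UFunctor :=
  @Build_UFunctor FX (fun X Y f => Fmor_emb f) Fmor_id_proof Fmor_comp_proof.

Section Eta.
Variable X : FinUltra.

Definition delta (x : pts X) : {ffun pts X -> dst X} := [ffun y => d x y].

Lemma kat_delta x : kat (delta x).
Proof.
apply/andP; split; last by apply/card_gt0P; exists x.
apply/forallP => y; apply/forallP => z; rewrite !ffunE; apply/andP; split.
- by have := ultraR x z y; rewrite (d_sym z y) maxnC.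
- by have := ultraR y x z; rewrite (d_sym y x).
Qed.

Definition etaK x : Kp X := exist _ (delta x) (kat_delta x).

Lemma etaK_inj : injective etaK.
Proof.
move=> x y /(congr1 val) /= /ffunP /(_ x); rewrite !ffunE => e.
by apply/esym/(d_zero y x).1; rewrite -e; apply/(d_zero x x).2.
Qed.

Definition eta_pt (x : pts X) : FP X := Some (etaK x).
Definition eta_d (a : dst X) : FD X := Some (a, false).

Lemma eta_pt_inj : injective eta_pt.
Proof. by move=> x y /Some_inj /etaK_inj. Qed.

Lemma eta_order a b : fle (eta_d a) (eta_d b) = dle a b.
Proof. by rewrite /fle /= !addn0 leq_mul2l /= leE. Qed.

Lemma eta_zero : eta_d (dzero X) = fzero X.
Proof. by []. Qed.

Lemma mD_delta x y : mD (etaK x) (etaK y) = d x y.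
Proof.
rewrite /mD /=; apply: (minD_char x) => [|]; last first.
  by exists x; rewrite !ffunE rk_max rk_dxx (d_sym y x); have := rk0 (d x y); lia.
move=> t; rewrite !ffunE rk_max.
by have := ultraR x t y; rewrite (d_sym t y).
Qed.

Lemma eta_dist x y : fd (eta_pt x) (eta_pt y) = eta_d (d x y).
Proof.
rewrite /=; case: (eqVneq (etaK x) (etaK y)) => [e|ne].
  by rewrite (etaK_inj e) /eta_d; have [_ ->] := d_zero y y.
by rewrite mD_delta.
Qed.

Definition eta : dcEmb X (FX X) :=
  @Build_dcEmb X (FX X) eta_pt eta_d eta_pt_inj eta_order eta_zero eta_dist.

End Eta.

Lemma eta_natural : @natural_from_id Ffun eta.
Proof.
move=> X Y f; split => [x|a] //=; congr Some; apply: val_inj => /=.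
apply/ffunP => z; rewrite !ffunE; apply/esym; apply: (minD_char x); last first.
  exists x; rewrite ffunE rk_max -emb_dist rk_dxx; have := rk0 (d (emb_pt f x) z); lia.
move=> t; rewrite ffunE rk_max -emb_dist; exact: ultraR.
Qed.


Section Ext.
Variables (X Y : FinUltra) (f : dcEmb X Y).
Hypothesis Q1 : forall c1 c2 : dst Y,
  c1 \notin codom (emb_d f) -> c2 \notin codom (emb_d f) -> c1 = c2.
Hypothesis Q2 : forall y1 y2 : pts Y,
  y1 \notin codom (emb_pt f) -> y2 \notin codom (emb_pt f) -> y1 = y2.
Hypothesis Q3 : forall y y' : pts Y, d y y' \in codom (emb_d f).

Definition pre (c : dst Y) : dst X :=
  [arg max_(a > dzero X | dle (emb_d f a) c) rk a].

Lemma pre_spec c : rk (emb_d f (pre c)) <= rk c /\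
  forall a, rk (emb_d f a) <= rk c -> rk (emb_d f a) <= rk (emb_d f (pre c)).
Proof.
have P0 : dle (emb_d f (dzero X)) c by rewrite emb_d_zero dzero_least.
rewrite /pre; case: (@arg_maxnP (dst X) (dzero X) (fun a => dle (emb_d f a) c) (fun a => rk a) P0) => a Pa Ha.
split; first by rewrite -leE.
by move=> b; rewrite -leE rk_emb => /Ha.
Qed.

Lemma pre_emb b : pre (emb_d f b) = b.
Proof.
have [h1 h2] := pre_spec (emb_d f b).
by apply: (@emb_d_inj _ _ f); apply: rk_inj; have := h2 b (leqnn _); lia.
Qed.

Lemma pre_codom c : c \in codom (emb_d f) -> emb_d f (pre c) = c.
Proof. by case/codomP => b ->; rewrite pre_emb. Qed.

Lemma pre_ncodom c : (c \in codom (emb_d f)) = (emb_d f (pre c) == c).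
Proof.
apply/idP/idP => [/pre_codom -> //|/eqP <-]; exact: codom_f.
Qed.

Definition g_d (c : dst Y) : FD X := Some (pre c, emb_d f (pre c) != c).

Lemma g_order c1 c2 : fle (g_d c1) (g_d c2) = dle c1 c2.
Proof.
rewrite /fle /g_d /= leE.
rewrite (@key_lex _ _ (rk (emb_d f (pre c1))) (rk (emb_d f (pre c2)))); try by rewrite rk_emb.
have E : forall c, (emb_d f (pre c) != c) = (rk (emb_d f (pre c)) != rk c).
  by move=> c; congr negb; apply/eqP/eqP => [->//|/rk_inj].
have B : emb_d f (pre c1) != c1 -> emb_d f (pre c2) != c2 -> c1 = c2.
  by rewrite -!pre_ncodom; apply: Q1.
have [L1 M1] := pre_spec c1; have [L2 M2] := pre_spec c2.
have {}M1 := M1 (pre c2); have {}M2 := M2 (pre c1).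
rewrite !E in B *.
have {}B : rk (emb_d f (pre c1)) != rk c1 -> rk (emb_d f (pre c2)) != rk c2 -> rk c1 = rk c2.
  by move=> h1 h2; rewrite (B h1 h2).
move: (rk (emb_d f (pre c1))) (rk (emb_d f (pre c2))) (rk c1) (rk c2) L1 L2 M1 M2 B.
move=> p1 p2 q1 q2 L1 L2 M1 M2 B.
case: (eqVneq p1 q1) B => e1 B; case: (eqVneq p2 q2) B => e2 B /=;
  try (have b0 := B isT isT); move: M1 M2;
  case: (leqP p2 q1) => H1; case: (leqP p1 q2) => H2 /= M1 M2;
  try (have m1 := M1 isT); try (have m2 := M2 isT); apply/idP/idP; lia.
Qed.

Lemma g_zero : g_d (dzero Y) = fzero X.
Proof. by rewrite /g_d -(emb_d_zero f) pre_emb eqxx. Qed.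

Lemma g_d_codom c : c \in codom (emb_d f) -> g_d c = Some (pre c, false).
Proof. by move=> /pre_codom e; rewrite /g_d e eqxx. Qed.

Definition uy (y : pts Y) : {ffun pts X -> dst X} := [ffun x => pre (d (emb_pt f x) y)].

Lemma uy_emb y x : emb_d f (uy y x) = d (emb_pt f x) y.
Proof. by rewrite ffunE pre_codom. Qed.

Lemma rk_uy y x : rk (emb_d f (uy y x)) = rk (d (emb_pt f x) y).
Proof. by rewrite uy_emb. Qed.

Lemma kat_uy (x0 : pts X) y : kat (uy y).
Proof.
apply/andP; split; last by apply/card_gt0P; exists x0.
apply/forallP => x; apply/forallP => x'; apply/andP; split.
- rewrite -(rk_emb_max f) -emb_dist !rk_uy.
  by have := ultraR (emb_pt f x) (emb_pt f x') y; rewrite d_sym.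
- rewrite -(rk_emb_max f) -emb_dist !rk_uy.
  by have := ultraR (emb_pt f x) y (emb_pt f x'); rewrite (d_sym y).
Qed.

Definition g_pt (y : pts Y) : FP X := insub (uy y).

Lemma g_pt_some (x0 : pts X) y : g_pt y = Some (Sub (uy y) (kat_uy x0 y)).
Proof. exact: insubT. Qed.

Lemma g_pt_none y : #|pts X| = 0 -> g_pt y = None.
Proof.
move=> e; apply: insubF; apply/negbTE; rewrite /kat e andbF //.
Qed.

Lemma empty_all (y y' : pts Y) : #|pts X| = 0 -> y = y'.
Proof.
move=> e; apply: Q2; apply/codomP => -[x _]; move/card0_eq: e => /(_ x); by rewrite inE.
Qed.

Lemma g_pt_inj : injective g_pt.
Proof.
move=> y1 y2.
case: (posnP #|pts X|) => [e|]; first by move=> _; apply: empty_all.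
move/card_gt0P => [x0 _]; rewrite !(g_pt_some x0) => /Some_inj /(congr1 val) /= e.
have H : forall x, d (emb_pt f x) y1 = d (emb_pt f x) y2.
  by move=> x; rewrite -!uy_emb e.
case: (boolP (y1 \in codom (emb_pt f))) => [/codomP [x1 e1]|n1].
  subst y1; apply: (proj1 (d_zero _ _)); rewrite -(H x1); exact: (proj2 (d_zero _ _)).
case: (boolP (y2 \in codom (emb_pt f))) => [/codomP [x2 e2]|n2].
  subst y2; apply/esym; apply: (proj1 (d_zero _ _)); rewrite (H x2); exact: (proj2 (d_zero _ _)).
exact: Q2.
Qed.

Lemma g_dist y y' : fd (g_pt y) (g_pt y') = g_d (d y y').
Proof.
rewrite (g_d_codom (Q3 y y')).
case: (posnP #|pts X|) => [e|].
  rewrite !g_pt_none // (empty_all y y' e); rewrite (proj2 (d_zero y' y') erefl).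
  by rewrite -(emb_d_zero f) pre_emb.
move/card_gt0P => [x0 _]; rewrite !(g_pt_some x0) /=.
case: eqP => [e|ne].
  have e' : y = y' by apply: g_pt_inj; rewrite !(g_pt_some x0) e.
  by rewrite e'; rewrite (proj2 (d_zero y' y') erefl); rewrite -(emb_d_zero f) pre_emb.
congr (Some (_, false)).
apply: (@emb_d_inj _ _ f); rewrite pre_codom //; apply: rk_inj.
apply/eqP; rewrite eqn_leq; apply/andP; split.
- have yin : (y \in codom (emb_pt f)) || (y' \in codom (emb_pt f)).
    case: (boolP (y \in _)) => //= n1; apply/negP => n2.
    by apply: ne; rewrite (Q2 n1 (introN idP n2)).
  have key : exists x, rk (emb_d f (dmax (uy y x) (uy y' x))) <= rk (d y y').
    case/orP: yin => /codomP [x ex]; exists x; rewrite emb_max rk_max !uy_emb ex rk_dxx.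
      by have := rk0 (d (emb_pt f x) y'); have := rk0 (d y' (emb_pt f x)); lia.
    by rewrite (d_sym (emb_pt f x) y); have := rk0 (d y (emb_pt f x)); lia.
  case: key => x kx; apply: leq_trans kx; rewrite rk_emb.
  exact: (minD_le (fun x => dmax (uy y x) (uy y' x)) x).
- have [x ex] := minD_ex (fun x => dmax (uy y x) (uy y' x)) x0.
  rewrite /mD /= ex emb_max rk_max !uy_emb.
  have := ultraR y (emb_pt f x) y'; rewrite (d_sym y (emb_pt f x)); lia.
Qed.

Definition gext : dcEmb Y (FX X) :=
  @Build_dcEmb Y (FX X) g_pt g_d g_pt_inj g_order g_zero g_dist.

Lemma gext_ok : emb_eq (dc_comp gext f) (eta X).
Proof.
split => [x|a] /=.
- rewrite (g_pt_some x); congr Some; apply: val_inj => /=.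
  apply/ffunP => t; rewrite !ffunE emb_dist pre_emb d_sym //.
- by rewrite /g_d pre_emb eqxx.
Qed.

End Ext.



Theorem proposition4p12 :
  exists (F : UFunctor) (eta : forall X, dcEmb X (Fobj F X)),
    natural_from_id eta /\
    forall (X Y : FinUltra) (f : dcEmb X Y), one_point_ext f ->
      exists g : dcEmb Y (Fobj F X), emb_eq (dc_comp g f) (eta X).
Proof.
exists Ffun, eta; split; first exact: eta_natural.
move=> X Y f hf.
have card1 : forall (T : finType) (A : {pred T}) a b, #|A| = 1 -> a \in A -> b \in A -> a = b.
  move=> T A a b e ha hb; have : #|A| <= 1 by rewrite e.
  by move/card_le1P => H; move: (H a ha b); rewrite hb => /esym/eqP.
have [Q1 [Q2 Q3]] :
  (forall c1 c2 : dst Y, c1 \notin codom (emb_d f) -> c2 \notin codom (emb_d f) -> c1 = c2) /\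
  (forall y1 y2 : pts Y, y1 \notin codom (emb_pt f) -> y2 \notin codom (emb_pt f) -> y1 = y2) /\
  (forall y y' : pts Y, d y y' \in codom (emb_d f)).
  case: hf => [[[gi fg gf] hc] | [[gi fg gf] hc]].
    split; first by move=> c1 c2 n1 n2; apply: (card1 _ _ _ _ hc); rewrite inE.
    split; first by move=> y1 y2; rewrite -(gf y1) codom_f.
    by move=> y y'; rewrite -(gf y) -(gf y') emb_dist codom_f.
  split; first by move=> c1 c2; rewrite -(gf c1) codom_f.
  split; first by move=> y1 y2 n1 n2; apply: (card1 _ _ _ _ hc); rewrite inE.
  by move=> y y'; rewrite -(gf (d y y')) codom_f.
by exists (gext Q1 Q2 Q3); apply: gext_ok.
Qed.
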